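(* Let $\Gamma$ be a countably infinite group acting minimally and continuously on a compact metrizable space $X$ such that $X$ consists of more than one $\Gamma$-orbit. Let $x_1\in X$ have trivial stabilizer, and let $f:X\setminus\{x_1\}\to\{1,-1\}$ be continuous and not extendable to a continuous function on $X$. Let $\Gamma\curvearrowright X_f$ and $\pi_f:X_f\to X$ be the associated McMahon extension. Set $X_+=f^{-1}(1)$ and $X_-=f^{-1}(-1)$. Then $\Gamma\curvearrowright X_f$ is null if and only if $\Gamma\curvearrowright X$ is null and the pair $(X_+,X_-)$ does not have arbitrarily large finite independence sets.
   Context: McMahon extension: there is a minimal continuous action $\Gamma\curvearrowright X_f$ on a compact metrizable space with a $\Gamma$-equivariant continuous surjection $\pi_f:X_f\to X$ such that $\pi_f^{-1}(x)$ is one point for $x\notin\Gamma x_1$ and two points for $x\in\Gamma x_1$, and $f\circ\pi_f$ on $X_f\setminus\pi_f^{-1}(x_1)$ extends to a continuous $\tilde f:X_f\to\{1,-1\}$; it is unique up to conjugacy as an extension of $X$. Concretely: pick $x_0\in X\setminus\Gamma x_1$, let $W$ be the Stone–Čech compactification of $\Gamma x_0$ (with topology from $X$), $\pi_W:W\to X$ the extension of the inclusion, $f_W$ the continuous extension of $f\circ\pi_W|_{\Gamma x_0}$ to $W$; define $w_1\sim w_2$ iff $\pi_W(w_1)=\pi_W(w_2)$ and $f_W(sw_1)=f_W(sw_2)$ for all $s\in\Gamma$; then $X_f=W/\!\sim$. For subsets $A_1,A_2\subseteq X$, a set $M\subseteq\Gamma$ is an independence set for $(A_1,A_2)$ if $\bigcap_{s\in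 F}s^{-1}A_{\omega(s)}\neq\emptyset$ for every nonempty finite $F\subseteq M$ and every $\omega\in\{1,2\}^F$. Null: for every sequence $\mathfrak s=\{s_n\}$ in $\Gamma$ and finite open cover $\mathcal U$, $\limsup_n\frac1n\log N(\bigvee_{i=1}^n s_i^{-1}\mathcal U)=0$, $N$ the minimal size of a subcover. *)

(* Defs.v *)
From HB Require Import structures.
From mathcomp Require Import all_boot all_order all_algebra.
From mathcomp Require Import all_classical all_reals all_analysis.
Set Implicit Arguments. Unset Strict Implicit. Unset Printing Implicit Defensive.
Import Order.TTheory GRing.Theory Num.Theory numFieldNormedType.Exports.
Local Open Scope classical_set_scope.
Local Open Scope ring_scope.

Section Dyn.
Variables (G : groupType) (X : topologicalType).

Definition is_action (a : G -> X -> X) : Prop :=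
  (forall x, a 1%g x = x) /\ (forall g h x, a (g * h)%g x = a g (a h x)).

Definition continuous_action (a : G -> X -> X) : Prop :=
  is_action a /\ forall g, continuous (a g).

Definition act_orbit (a : G -> X -> X) (x : X) : set X := [set a g x | g in setT].

Definition minimal_action (a : G -> X -> X) : Prop :=
  forall x, closure (act_orbit a x) = setT.

(* independence set M for the pair (A1, A2): for every nonempty finite F ⊆ M
   and every choice function ω : F -> {1,2} (encoded by bool, true = 1),
   the intersection of s^{-1} A_{ω(s)} over s ∈ F is nonempty *)
Definition indep_set (a : G -> X -> X) (A1 A2 : set X) (M : set G) : Prop :=
  forall F : set G, finite_set F -> F !=set0 -> F `<=` M ->
  forall w : G -> bool,
    \bigcap_(s in F) (a s @^-1` (if w s then A1 else A2)) !=set0.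

Definition arb_large_indep (a : G -> X -> X) (A1 A2 : set X) : Prop :=
  forall n : nat, exists M : set G,
    [/\ finite_set M, indep_set a A1 A2 M &
        exists e : 'I_n -> G, injective e /\ range e `<=` M].

Variable R : realType.

(* N(V): minimal cardinality of a subcover of the family V (+oo if none) *)
Definition Ncov (V : set (set X)) : \bar R :=
  ereal_inf [set (n%:R)%:E | n in
    [set n : nat | exists F : 'I_n -> set X,
        (forall j, V (F j)) /\ setT `<=` \bigcup_(j in setT) F j]].

Definition join_cover (a : G -> X -> X) (U : set (set X)) (s : nat -> G)
    (n : nat) : set (set X) :=
  [set B | exists W : nat -> set X,
      (forall i, (0 < i <= n)%N -> U (W i)) /\
      B = \bigcap_(i in [set i : nat | (0 < i <= n)%N]) (a (s i) @^-1` W i)].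

Definition null_action (a : G -> X -> X) : Prop :=
  forall (s : nat -> G) (U : set (set X)),
    finite_set U -> (forall A, U A -> open A) ->
    setT `<=` \bigcup_(A in U) A ->
    limn_esup (fun n : nat =>
      ((ln (fine (Ncov (join_cover a U s n))) / n%:R)%:E)) = 0%E.

End Dyn.

(* Main.v *)
Require Import Defs.
From HB Require Import structures.
From mathcomp Require Import all_boot all_order.
Set Implicit Arguments. Unset Strict Implicit. Unset Printing Implicit Defensive.

Section Pajor.
Variable U : finType.
Implicit Types (S : {set {ffun U -> bool}}) (D E : {set U}).

Definition restr D (p : {ffun U -> bool}) : {ffun U -> bool} :=
  [ffun u => (u \in D) && p u].

Definition shat S E : bool :=
  [forall g : {ffun U -> bool}, [exists p in S, [forall u in E, p u == g u]]].

Lemma restrK D D' p : D' \subset D -> restr D' (restr D p) = restr D' p.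
Proof.
move=> sub; apply/ffunP => u; rewrite !ffunE.
by case uD' : (u \in D') => //=; rewrite (subsetP sub).
Qed.

Lemma restr_id D S : {in S, forall q, restr D q = q} -> restr D @: S = S.
Proof. by move=> H; rewrite -[RHS]imset_id; apply: eq_in_imset. Qed.

Lemma pajor_gen n : forall D S, #|D| = n ->
  #|restr D @: S| <= #|[set E : {set U} | (E \subset D) && shat S E]|.
Proof.
elim: n => [|n IH] D S cD.
  have D0 : D = set0 by apply/eqP; rewrite -cards_eq0 cD.
  subst D.
  case: (set_0Vmem S) => [->|[p pS]]; first by rewrite imset0 cards0.
  have : restr set0 @: S \subset [set restr set0 p].
    apply/subsetP => _ /imsetP[q _ ->]; rewrite inE; apply/eqP/ffunP => u.
    by rewrite !ffunE inE.
  move/subset_leq_card; rewrite cards1 => /leq_trans; apply.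
  rewrite card_gt0; apply/set0Pn; exists set0; rewrite inE sub0set /=.
  by apply/forallP => g; apply/existsP; exists p; rewrite pS; apply/forall_inP => u; rewrite inE.
have [u0 u0D] : exists u0, u0 \in D.
  by apply/set0Pn; rewrite -card_gt0 cD.
pose D' := D :\ u0.
have cD' : #|D'| = n by move: cD; rewrite (cardsD1 u0) u0D add1n => -[].
have sD' : D' \subset D by exact: subD1set.
have u0D' : u0 \notin D' by rewrite !inE eqxx.
pose S' := restr D @: S.
pose S0 := [set r in S' | r u0 == false]; pose S1 := [set r in S' | r u0 == true].
pose X0 := restr D' @: S0; pose X1 := restr D' @: S1.
have injc (c : bool) : {in [set r in S' | r u0 == c] &, injective (restr D')}.
  move=> r r'; rewrite !inE => /andP[/imsetP[p _ ->] /eqP rc] /andP[/imsetP[p' _ ->] /eqP rc'] E.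
  apply/ffunP => u; have := congr1 (fun f : {ffun U -> bool} => f u) E.
  rewrite !ffunE => Eu; case: (eqVneq u u0) => [->|uu0].
    by move: rc rc'; rewrite !ffunE => -> ->.
  case uD : (u \in D) => //=.
  have uD' : u \in D' by rewrite !inE uu0 uD.
  by move: Eu; rewrite uD' uD.
have cS' : #|S'| = #|X0| + #|X1|.
  rewrite /X0 /X1 (card_in_imset (injc false)) (card_in_imset (injc true)).
  have -> : [set r in S' | r u0 == true] = S' :&: [set r : {ffun U -> bool} | r u0].
    by apply/setP => r; rewrite !inE; case: (r u0); rewrite ?andbT ?andbF.
  have -> : [set r in S' | r u0 == false] = S' :\: [set r : {ffun U -> bool} | r u0].
    by apply/setP => r; rewrite !inE; case: (r u0); rewrite ?andbT ?andbF.
  by rewrite addnC cardsID.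
have XU : X0 :|: X1 = restr D' @: S.
  rewrite -imsetU.
  have -> : S0 :|: S1 = S' by apply/setP => r; rewrite !inE; case: (r u0); rewrite /= ?andbT ?andbF ?orbF.
  rewrite -imset_comp; apply: eq_imset => p /=; exact: restrK.
pose Z := X0 :&: X1.
have ZZ : restr D' @: Z = Z.
  apply: restr_id => q; rewrite inE => /andP[/imsetP[r _ ->] _].
  exact: restrK.
have IH1 := IH D' S cD'.
have IH2 := IH D' Z cD'.
rewrite ZZ in IH2.
pose P1 := [set E : {set U} | (E \subset D') && shat S E].
pose P2 := [set E : {set U} | (E \subset D') && shat Z E].
pose Q := [set u0 |: E | E in P2].
have cQ : #|Q| = #|P2|.
  apply: card_in_imset => E E'; rewrite !inE => /andP[sE _] /andP[sE' _] EE.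
  apply/setP => u; have := congr1 (fun A : {set U} => u \in A) EE; rewrite !in_setU1.
  case: (eqVneq u u0) => [->|//] _.
  apply/idP/idP => H; [move: (subsetP sE _ H)|move: (subsetP sE' _ H)];
    by rewrite (negbTE u0D').
have disj : P1 :&: Q = set0.
  apply/setP => E; rewrite !inE; apply/negP => /andP[/andP[sE _] /imsetP[E' _ EE]].
  by move: (subsetP sE u0); rewrite EE in_setU1 eqxx (negbTE u0D') => /(_ isT).
have ext (c : bool) (q : {ffun U -> bool}) (E : {set U}) (g : {ffun U -> bool}) :
    q \in restr D' @: [set r in S' | r u0 == c] -> E \subset D' ->
    [forall u in E, q u == g u] -> g u0 = c ->
    [exists p in S, [forall u in u0 |: E, p u == g u]].
  move=> /imsetP[r]; rewrite inE => /andP[/imsetP[p pS ->] /eqP rc] -> sE /forall_inP qg gc.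
  apply/existsP; exists p; rewrite pS /=; apply/forall_inP => u; rewrite in_setU1.
  case/orP => [/eqP->|uE].
    by move: rc; rewrite ffunE u0D /= gc => ->.
  have uD' := subsetP sE _ uE; have uD := subsetP sD' _ uD'.
  by have := qg u uE; rewrite !ffunE uD uD'.
have sub : P1 :|: Q \subset [set E : {set U} | (E \subset D) && shat S E].
  apply/subsetP => E; rewrite !inE => /orP[/andP[sE shE]|/imsetP[E' E'P2 ->]].
    by rewrite shE (subset_trans sE sD').
  move: E'P2; rewrite inE => /andP[sE' /forallP shE'].
  apply/andP; split.
    by apply/subsetP => u; rewrite in_setU1 => /orP[/eqP->//|/(subsetP sE')/(subsetP sD')].
  apply/forallP => g; have /existsP[q /andP[]] := shE' g.
  rewrite inE => /andP[q0 q1] qg.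
  by case gu0 : (g u0); [apply: (ext true q)|apply: (ext false q)].
have := subset_leq_card sub; rewrite cardsU disj cards0 subn0 cQ => H.
apply: leq_trans H; rewrite cS' -cardsUI XU.
by apply: leq_add.
Qed.

Lemma pajor S : #|S| <= #|[set E : {set U} | shat S E]|.
Proof.
have := @pajor_gen _ setT S erefl.
rewrite restr_id; last by move=> q _; apply/ffunP => u; rewrite ffunE inE.
move/leq_trans; apply; apply: subset_leq_card; apply/subsetP => E.
by rewrite !inE => /andP[].
Qed.

Lemma card_small_sets d : #|[set E : {set U} | #|E| <= d]| <= (#|U|.+1) ^ d.
Proof.
elim: d => [|d IH].
  have : [set E : {set U} | #|E| <= 0] \subset [set set0].
    by apply/subsetP => E; rewrite !inE leqn0 cards_eq0.
  by move/subset_leq_card; rewrite cards1.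
have : [set E : {set U} | #|E| <= d.+1] \subset
  [set E : {set U} | #|E| <= d] :|: [set p.1 |: p.2 | p in setX [set: U] [set E : {set U} | #|E| <= d]].
  apply/subsetP => E; rewrite !inE leq_eqVlt ltnS => /orP[/eqP cE|->//].
  have [u uE] : exists u, u \in E by apply/set0Pn; rewrite -card_gt0 cE.
  apply/orP; right; apply/imsetP; exists (u, E :\ u); last by rewrite /= setD1K.
  by rewrite !inE /=; move: cE; rewrite (cardsD1 u) uE add1n => -[->].
move/subset_leq_card/leq_trans; apply.
apply: leq_trans (_ : _ <= #|[set E : {set U} | #|E| <= d]| + #|[set p.1 |: p.2 | p in setX [set: U] [set E : {set U} | #|E| <= d]]|) _.
  by rewrite -cardsUI leq_addr.
apply: leq_trans (leq_add (leqnn _) (leq_imset_card _ _)) _.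
rewrite cardsX cardsT expnS.
rewrite -{1}(mul1n #|_|) -mulnDl add1n.
by apply: leq_mul.
Qed.

Lemma pajor_bound S d : (forall E, shat S E -> #|E| <= d) -> #|S| <= (#|U|.+1) ^ d.
Proof.
move=> H; apply: leq_trans (pajor S) _; apply: leq_trans (card_small_sets d).
by apply: subset_leq_card; apply/subsetP => E; rewrite !inE => /H.
Qed.
End Pajor.

From mathcomp Require Import all_boot all_order all_algebra.
From mathcomp Require Import all_classical all_reals all_analysis.
From mathcomp Require Import finmap.
From mathcomp Require Import ring lra zify.
Import Order.TTheory GRing.Theory Num.Theory numFieldNormedType.Exports.
Local Open Scope classical_set_scope.
Local Open Scope ring_scope.

Section NcovLemmas.
Context {X : topologicalType} {R : realType}.

Definition covers (V : set (set X)) (m : nat) :=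
  exists F : 'I_m -> set X, (forall j, V (F j)) /\ setT `<=` \bigcup_(j in setT) F j.

Lemma Ncov_ub V m : covers V m -> (Ncov R V <= (m%:R)%:E)%E.
Proof. by move=> cm; apply: ereal_inf_lbound; exists m. Qed.

Lemma Ncov_lb V (M : nat) : (forall m, covers V m -> (M <= m)%N) ->
  ((M%:R)%:E <= Ncov R V)%E.
Proof. by move=> H; apply: le_ereal_inf_tmp => _ [m cm <-]; rewrite lee_fin ler_nat; exact: H. Qed.

Lemma Ncov_attain V m : covers V m -> exists N, [/\ covers V N,
  Ncov R V = (N%:R)%:E & forall m', covers V m' -> (N <= m')%N].
Proof.
move=> cm.
have ex : exists n, `[< covers V n >] by exists m; apply/asboolP.
have [cN minN] : covers V (ex_minn ex) /\ forall m', covers V m' -> (ex_minn ex <= m')%N.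
  case: ex_minnP => n /asboolP cn H; split => // m' /asboolP; exact: H.
exists (ex_minn ex); split => //; apply/eqP; rewrite eq_le Ncov_ub //= Ncov_lb //.
Qed.

Lemma covers_gt0 V m (x : X) : covers V m -> (0 < m)%N.
Proof. by case: m => // -[F [_ /(_ x I) [[j ?]]]]. Qed.

Lemma covers_fin V (J : finType) (F : J -> set X) :
  (forall i, V (F i)) -> setT `<=` \bigcup_(i in setT) F i -> covers V #|J|.
Proof.
move=> VF cov; exists (fun j => F (enum_val j)); split => [j|x _]; first exact: VF.
have [i _ Fi] := cov x I; exists (enum_rank i) => //; by rewrite enum_rankK.
Qed.


Lemma join_covers (G : groupType) (a : G -> X -> X) U s n :
  finite_set U -> setT `<=` \bigcup_(A in U) A ->
  exists m, covers (join_cover a U s n) m.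
Proof.
move=> /finite_fsetP[B ->] cov.
pose F (phi : {ffun 'I_n.+1 -> B}) :=
  \bigcap_(i in [set i : nat | (0 < i <= n)%N]) (a (s i) @^-1` val (phi (inord i))).
exists #|{ffun 'I_n.+1 -> B}|; apply: (@covers_fin _ _ F).
  move=> phi; exists (fun i => val (phi (inord i))); split => // i _.
  exact: fsvalP.
move=> x _.
have : forall i : 'I_n.+1, exists b : B, val b (a (s i) x).
  move=> i; have [A BA Ax] := cov (a (s i) x) I.
  by exists [` (BA : A \in B)]%fset.
move=> /fin_all_exists[phi Hphi]; exists [ffun i => phi i] => //.
move=> i /= /andP[i0 iN]; rewrite ffunE.
have := Hphi (inord i); rewrite inordK // ltnS.
Qed.

End NcovLemmas.

Lemma esup0P {R : realType} (u : nat -> R) : (forall n, 0 <= u n) ->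
  (limn_esup (fun n => (u n)%:E) = 0%E) <->
  (forall e, 0 < e -> \forall n \near \oo, u n <= e).
Proof.
move=> u0; split.
  move=> h; have h1 : (fun n => (u n)%:E) @ \oo --> 0%E.
    by apply: limn_esup_le_cvg; [rewrite h|move=> n; rewrite lee_fin].
  have h2 : u @ \oo --> 0 by apply: (fine_cvg h1).
  move=> e e0; have := (cvgrPdist_le _ _).1 h2 e e0.
  move=> H; near=> n; have : `|0 - u n| <= e by near: n; exact: H.
  by rewrite sub0r normrN ger0_norm.
move=> h; have h1 : u @ \oo --> 0.
  apply/cvgrPdist_le => e e0; near=> n; rewrite sub0r normrN ger0_norm //.
  by near: n; exact: h.
have h2 : (fun n => (u n)%:E) @ \oo --> 0%E.
  by apply: cvg_EFin => //; exact: nearW.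
exact: (cvg_limn_einf_sup h2).2.
Unshelve. all: by end_near. Qed.

Lemma num_lemma {R : realType} (K d : nat) (e : R) : 0 < e ->
  \forall n \near \oo, d%:R * ln (((K * n.+1).+1)%N%:R : R) / n%:R <= e.
Proof.
move=> e0.
pose C := (2 * K + 1)%N.
pose eps := e / (d%:R + 1).
have d1 : (0 : R) < d%:R + 1 by rewrite ltr_wpDl.
have eps0 : 0 < eps by rewrite divr_gt0.
pose N := (Num.Def.trunc (2 * C%:R / eps ^+ 2)).+1.
have NR : 2 * C%:R / eps ^+ 2 < N%:R by exact: truncnS_gt.
have e2 : 0 < eps ^+ 2 by rewrite exprn_gt0.
have NR' : 2 * C%:R <= N%:R * eps ^+ 2.
  by rewrite -ler_pdivrMr // ltW.
near=> n.
have Nn : (N <= n)%N by near: n; exists N.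
have n1 : (1 <= n)%N by apply: leq_trans Nn.
have nR : (N%:R : R) <= n%:R by rewrite ler_nat.
have nR0 : (0 : R) < n%:R by rewrite ltr0n.
have xb : (((K * n.+1).+1)%N%:R : R) <= C%:R * n%:R.
  rewrite -natrM ler_nat /C; nia.
have ex : C%:R * n%:R <= expR (eps * n%:R).
  apply: le_trans (expR_ge1Dxn 1 _) ; last by rewrite mulr_ge0 // ltW.
  have -> : ((1.+1)`!%:R : R) = 2 by [].
  have C0 : (0 : R) <= C%:R by [].
  nra.
have lnb : ln (((K * n.+1).+1)%N%:R : R) <= eps * n%:R.
  rewrite -[X in _ <= X]expRK ler_ln ?posrE ?expR_gt0 ?ltr0n //.
  exact: le_trans xb ex.
have d0 : (0 : R) <= d%:R by [].
rewrite ler_pdivrMr //.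
apply: le_trans (_ : d%:R * (eps * n%:R) <= _); first by rewrite ler_wpM2l.
have -> : d%:R * (eps * n%:R) = (d%:R / (d%:R + 1)) * e * n%:R.
  by rewrite /eps; field; rewrite gt_eqF.
apply: ler_wpM2r; first exact: ltW.
have q1 : d%:R / (d%:R + 1) <= (1:R) by rewrite ler_pdivrMr // mul1r; lra.
by rewrite -[X in _ <= X]mul1r ler_wpM2r // ltW.
Unshelve. all: by end_near. Qed.

Lemma compact_fip {T : topologicalType} (A : set T) : compact A ->
  forall (I : choiceType) (D : set I) (f : I -> set T),
  closed_fam_of A D f -> finI D f -> (exists i, D i) -> \bigcap_(i in D) f i !=set0.
Proof.
move=> Aco I D f [g gcl feAg] finIf [i Di].
have [|p [Ap clfinIfp]] := Aco _ (finI_filter finIf).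
  by exists (f i); [apply: finI_from1|rewrite feAg // => ? []].
exists p => j Dj; rewrite feAg //; split=> //; apply: gcl => // B.
by apply: clfinIfp; exists (f j); [apply: finI_from1|rewrite feAg // => ? []].
Qed.

Lemma compact_coverT {T : topologicalType} (A : set T) : compact A -> cover_compact A.
Proof.
move=> Aco0.
rewrite cover_compactE => I D f [g gop feAg] fcov.
  case: (pselect (exists i, D i)) => [[j Dj] | /asboolP]; last first.
    rewrite asbool_neg => /forallp_asboolPn D0.
    by exists fset0 => // ? /fcov [? /D0].
  apply/exists2P; apply: contrapT.
  move=> /asboolP; rewrite asbool_neg => /forallp_asboolPn sfncov.
  suff [p IAnfp] : \bigcap_(i in D) (A `\` f i) !=set0.
    by have /IAnfp [Ap _] := Dj; have /fcov [k /IAnfp [_]] := Ap.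
  apply: (compact_fip Aco0); last by exists j.
    exists (fun i => ~` g i) => i Di; first exact/open_closedC/gop.
    rewrite predeqE => p; split=> [[Ap nfip] | [Ap ngip]]; split=> //.
      by move=> gip; apply: nfip; rewrite feAg.
    by rewrite feAg // => - [].
  move=> D' sD.
  have /asboolP : ~ A `<=` cover [set` D'] f by move=> sAIf; exact: (sfncov D').
  rewrite asbool_neg => /existsp_asboolPn [p /asboolP].
  rewrite asbool_neg => /imply_asboolPn [Ap nUfp].
  by exists p => i D'i; split=> // fip; apply: nUfp; exists i.
Qed.

Section Main.
Variables (R : realType) (G : groupType) (X : pseudoMetricType R) (a : G -> X -> X)
  (x1 : X) (f : X -> R) (Y : pseudoMetricType R) (b : G -> Y -> Y) (pi : Y -> X)
  (ft : Y -> R).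
Hypotheses (hX : hausdorff_space X) (cX : compact [set: X])
  (ca : continuous_action a)
  (fnext : ~ (exists g : X -> R, continuous g /\ forall x, x <> x1 -> g x = f x))
  (hY : hausdorff_space Y) (cY : compact [set: Y])
  (cb : continuous_action b) (mb : minimal_action b)
  (cpi : continuous pi) (spi : forall x, exists y, pi y = x)
  (epi : forall g y, pi (b g y) = a g (pi y))
  (fib1 : forall x, ~ act_orbit a x1 x -> exists y, pi @^-1` [set x] = [set y])
  (fib2 : forall x, act_orbit a x1 x ->
     exists y1 y2, y1 <> y2 /\ pi @^-1` [set x] = [set y1; y2])
  (orb2 : exists x y : X, ~ act_orbit a x y)
  (ftc : continuous ft) (ftpm : forall y, ft y = 1 \/ ft y = -1)
  (ftf : forall y, pi y <> x1 -> ft y = f (pi y)).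

Lemma img_closed (C : set Y) : closed C -> closed (pi @` C).
Proof.
move=> cC; apply: compact_closed => //; apply: continuous_compact.
  exact: continuous_subspaceT.
by rewrite -[C]setTI; apply: compact_closedI.
Qed.

Let sec x := projT1 (cid (spi x)).
Let secK x : pi (sec x) = x. Proof. exact: (projT2 (cid (spi x))). Qed.

Lemma b_mul g h y : b (g * h)%g y = b g (b h y).
Proof. by case: cb => -[_ ->]. Qed.
Lemma b_one y : b 1%g y = y.
Proof. by case: cb => -[->]. Qed.
Lemma a_mul g h x : a (g * h)%g x = a g (a h x).
Proof. by case: ca => -[_ ->]. Qed.
Lemma a_one x : a 1%g x = x.
Proof. by case: ca => -[->]. Qed.
Lemma b_inj g : injective (b g).
Proof. by move=> y y' E; rewrite -(b_one y) -(b_one y') -(mulVg g) !b_mul E. Qed.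

Lemma distinguish z1 z2 : pi z1 = x1 -> pi z2 = x1 -> z1 <> z2 -> ft z1 <> ft z2.
Proof.
move=> p1 p2 z12 fz.
have [y1 [y2 [y12 fibE]]] := fib2 (ex_intro2 _ _ 1%g I (a_one x1)).
have inF y : pi y = x1 -> y = y1 \/ y = y2.
  by move=> py; have : (pi @^-1` [set x1]) y by []; rewrite fibE => -[]; [left|right].
have f12 : ft y1 = ft y2.
  case: (inF _ p1) => e1; case: (inF _ p2) => e2; subst => //; by [|rewrite fz].
have fx1 y y' : pi y = x1 -> pi y' = x1 -> ft y = ft y'.
  by move=> py py'; case: (inF _ py) => ->; case: (inF _ py') => ->.
pose g x := ft (sec x).
have gpi y : ft y = g (pi y).
  have [py|py] := pselect (pi y = x1); first by apply: fx1; rewrite ?secK.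
  by rewrite /g ftf // ftf secK.
apply: fnext; exists g; split.
  apply/continuous_closedP => C cC.
  have -> : g @^-1` C = pi @` (ft @^-1` C).
    apply/seteqP; split => [x gx|_ [y Cy <-]]; first by exists (sec x); rewrite ?secK.
    by rewrite /= -gpi.
  by apply: img_closed; move/continuous_closedP : ftc; apply.
by move=> x xx1; rewrite /g ftf secK.
Qed.


Lemma ftb_cont h : continuous (fun y => ft (b h y)).
Proof. by move=> y; apply: continuous_comp; [case: cb => _; apply|exact: ftc]. Qed.

Lemma key_cover (U : set (set Y)) : (forall A, U A -> open A) ->
  setT `<=` \bigcup_(A in U) A -> forall x, exists B h Up Um,
  [/\ open B, B x, U Up, U Um &
   forall y, B (pi y) -> (if 0 < ft (b h y) then Up else Um) y].
Proof.
move=> oU cov x.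
have [ox|nox] := pselect (act_orbit a x1 x); last first.
  have [y0 fibE] := fib1 nox.
  have [U0 UU0 U0y0] := cov y0 I.
  exists (~` (pi @` (~` U0))), 1%g, U0, U0; split => //.
  - exact/closed_openC/img_closed/open_closedC/oU.
  - move=> [y nU0 pyx]; have : (pi @^-1` [set x]) y by [].
    by rewrite fibE => yy0; apply: nU0; rewrite yy0.
  - move=> y By; rewrite if_same; apply: contrapT => nU0; apply: By; by exists y.
case: ox => g _ xE.
have [y1 [y2 [y12 fibE]]] := fib2 (ex_intro2 _ _ g I xE).
pose h := (g^-1)%g.
have ph y : pi y = x -> pi (b h y) = x1.
  by move=> py; rewrite epi py -xE -a_mul mulVg a_one.
have py1 : pi y1 = x by have : (pi @^-1` [set x]) y1 by rewrite fibE; left.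
have py2 : pi y2 = x by have : (pi @^-1` [set x]) y2 by rewrite fibE; right.
have d12 : ft (b h y1) <> ft (b h y2).
  by apply: distinguish; [exact: ph|exact: ph|move/b_inj].
have main yp ym : pi @^-1` [set x] = [set yp; ym] -> 0 < ft (b h yp) ->
    ft (b h ym) < 0 -> exists B h Up Um,
    [/\ open B, B x, U Up, U Um &
     forall y, B (pi y) -> (if 0 < ft (b h y) then Up else Um) y].
  move=> fE pp pm.
  have [Up UUp Upy] := cov yp I; have [Um UUm Umy] := cov ym I.
  pose Pp := [set y | 0 <= ft (b h y)]; pose Pm := [set y | ft (b h y) <= 0].
  have cPp : closed Pp.
    by have := (continuous_closedP _).1 (@ftb_cont h) _ (@closed_ge R 0).
  have cPm : closed Pm.
    by have := (continuous_closedP _).1 (@ftb_cont h) _ (@closed_le R 0).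
  have inF y : pi y = x -> y = yp \/ y = ym.
    by move=> py; have : (pi @^-1` [set x]) y by []; rewrite fE => -[]; [left|right].
  exists (~` (pi @` (Pp `&` ~` Up)) `&` ~` (pi @` (Pm `&` ~` Um))), h, Up, Um; split => //.
  - apply: openI; apply/closed_openC/img_closed; apply: closedI => //;
      exact: open_closedC (oU _ _).
  - split => -[y [Py nU] pyx]; case: (inF _ pyx) => ye; subst y => //.
    + by move: Py; rewrite /Pp /= leNgt pm.
    + by move: Py; rewrite /Pm /= leNgt pp.
  - move=> y [Bp Bm]; case: ifP => H; apply: contrapT => nU.
      by apply: Bp; exists y => //; split => //; rewrite /Pp /= ltW.
    by apply: Bm; exists y => //; split => //; rewrite /Pm /= leNgt H.
case: (ftpm (b h y1)) => e1; case: (ftpm (b h y2)) => e2.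
- by exfalso; apply: d12; rewrite e1 e2.
- by apply: (main y1 y2 fibE); rewrite ?e1 ?e2 ?oppr_lt0 ltr01.
- by apply: (main y2 y1); rewrite ?e1 ?e2 ?oppr_lt0 ?ltr01 // setUC.
- by exfalso; apply: d12; rewrite e1 e2.
Qed.


Lemma sgn_nbhs h y0 : nbhs y0 [set y | (0 < ft (b h y)) = (0 < ft (b h y0))].
Proof.
have c := @ftb_cont h y0.
case: (ftpm (b h y0)) => e.
  have : nbhs (ft (b h y0)) [set r : R | 0 < r].
    by apply: open_nbhs_nbhs; split; [exact: open_gt|rewrite /= e ltr01].
  move=> H0; have H1 : nbhs y0 [set y | 0 < ft (b h y)] by exact: c H0.
  by apply: filterS H1 => y /= ->; rewrite e ltr01.
have : nbhs (ft (b h y0)) [set r : R | r < 0].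
  by apply: open_nbhs_nbhs; split; [exact: open_lt|rewrite /= e oppr_lt0 ltr01].
move=> H0; have H1 : nbhs y0 [set y | ft (b h y) < 0] by exact: c H0.
apply: filterS H1 => y /= H.
by rewrite e oppr_gt0 ltr10; apply/negbTE; rewrite -leNgt ltW.
Qed.

Lemma exists_nonorbit : exists z, ~ act_orbit a x1 (pi z).
Proof.
case: orb2 => x [y nxy].
have [[g _ gx]|nx] := pselect (act_orbit a x1 x); last by exists (sec x); rewrite secK.
exists (sec y); rewrite secK => -[g' _ gy]; apply: nxy; exists (g' * g^-1)%g => //.
by rewrite a_mul -gx -(a_mul g^-1 g) mulVg a_one.
Qed.

Lemma nonorbit_shift x t : ~ act_orbit a x1 x -> a t x <> x1.
Proof.
move=> nx E; apply: nx; exists (t^-1)%g => //.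
by rewrite -E -a_mul mulVg a_one.
Qed.

Lemma nonorbit_act x g : ~ act_orbit a x1 x -> ~ act_orbit a x1 (a g x).
Proof.
move=> nx [g' _ E]; apply: nx; exists (g^-1 * g')%g => //.
by rewrite a_mul E -a_mul mulVg a_one.
Qed.

Definition Ap := [set x | x <> x1 /\ f x = 1].
Definition Am := [set x | x <> x1 /\ f x = -1].

Lemma ysh_indep (M : set G) : finite_set M ->
  (forall w : G -> bool, exists y, forall t, M t -> (0 < ft (b t y)) = w t) ->
  indep_set a Ap Am M.
Proof.
move=> fM HM F _ _ FM w.
have [y0 Hy0] := HM w.
have [z nz] := exists_nonorbit.
have nb : nbhs y0 (\bigcap_(t in [set` fset_set M]) [set y | (0 < ft (b t y)) = w t]).
  apply: filter_bigI => t; rewrite in_fset_set // => /set_mem Mt.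
  by rewrite -(Hy0 t Mt); exact: sgn_nbhs.
have cl : closure (act_orbit b z) y0 by rewrite (mb z).
have [_ [[g _ <-] Hg]] := cl _ nb.
exists (pi (b g z)) => t Ft.
have Mt := FM t Ft.
have := Hg t; rewrite /= in_fset_set // => /(_ (mem_set Mt)) Ht.
have nx : ~ act_orbit a x1 (pi (b g z)) by rewrite epi; exact: nonorbit_act.
have ne := nonorbit_shift (t:=t) nx.
have pE : pi (b t (b g z)) = a t (pi (b g z)) by rewrite epi.
have fE : f (a t (pi (b g z))) = ft (b t (b g z)) by rewrite ftf pE.
rewrite /=; move: Ht; case: (w t) => Ht; split => //; rewrite fE;
  by case: (ftpm (b t (b g z))) Ht => ->; rewrite ?ltr01 ?oppr_gt0 ?ltr10.
Qed.

Lemma indep_ysh (M : set G) k (e : 'I_k -> G) : (0 < k)%N -> injective e ->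
  range e `<=` M -> indep_set a Ap Am M ->
  forall w : {ffun 'I_k -> bool}, exists y, forall j, (0 < ft (b (e j) y)) = w j.
Proof.
move=> k0 ie sM ind w.
pose W (t : G) := `[< exists j, e j = t /\ w j >].
have Fne : range e !=set0 by exists (e (Ordinal k0)), (Ordinal k0).
have [x Hx] := ind (range e) (finite_image e finite_finset) Fne sM W.
exists (sec x) => j.
have := Hx (e j) (ex_intro2 _ _ j I erefl).
have -> : W (e j) = w j.
  case wj : (w j); first by apply/asboolP; exists j.
  apply/negbTE/asboolP => -[j' [ej' wj']].
  by move: wj'; rewrite (ie _ _ ej') wj.
move=> Hj.
have ne : a (e j) x <> x1 by move: Hj; case: (w j) => -[].
have fE : ft (b (e j) (sec x)) = f (a (e j) x) by rewrite ftf epi secK.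
by rewrite fE; move: Hj; case: (w j) => -[_ ->]; rewrite ?ltr01 ?oppr_gt0 ?ltr10.
Qed.


Definition rr {Z : topologicalType} (c : G -> Z -> Z) (U : set (set Z))
  (s : nat -> G) (n : nat) : R := ln (fine (Ncov R (join_cover c U s n))) / n%:R.

Lemma rr_ge0 {Z : topologicalType} (c : G -> Z -> Z) U s n (z0 : Z) :
  finite_set U -> setT `<=` \bigcup_(A in U) A -> 0 <= rr c U s n.
Proof.
move=> fU cov; have [m cm] := join_covers c s n fU cov; rewrite /rr.
have [N [cN -> _]] := @Ncov_attain Z R _ _ cm.
have N0 := covers_gt0 z0 cN.
by rewrite /rr /=; apply: divr_ge0 => //; apply: ln_ge0; rewrite ler1n.
Qed.

Lemma covers_transfer U s n m : covers (join_cover b [set pi @^-1` A | A in U] s n) m ->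
  covers (join_cover a U s n) m.
Proof.
move=> [F [JF cF]].
have : forall j, exists BX, join_cover a U s n BX /\ F j = pi @^-1` BX.
  move=> j; have [W [UW ->]] := JF j.
  have [A HA] : {A : nat -> set X & forall i, (0 < i <= n)%N -> U (A i) /\ W i = pi @^-1` A i}.
    apply: (@choice _ _ (fun i A => (0 < i <= n)%N -> U A /\ W i = pi @^-1` A)) => i; case: (boolP (0 < i <= n)%N) => Hi; last by exists setT.
    by have [A UA WA] := UW i Hi; exists A.
  exists (\bigcap_(i in [set i | (0 < i <= n)%N]) (a (s i) @^-1` A i)); split.
    by exists A; split => // i Hi; exact: (HA i Hi).1.
  apply/seteqP; split => y Hy i Hi; move: (Hy i Hi);
    by rewrite /= ?(HA i Hi).2 /= epi.
move=> /fin_all_exists[BX HBX]; exists BX; split; first by move=> j; case: (HBX j).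
move=> x _; have [j _ Fj] := cF (sec x) I; exists j => //.
by move: Fj; rewrite (HBX j).2 /= secK.
Qed.

Lemma partA : null_action R b -> null_action R a.
Proof.
move=> Yn s U fU oU cov.
pose U' := [set pi @^-1` A | A in U].
have fU' : finite_set U' := finite_image _ fU.
have oU' : forall A, U' A -> open A.
  by move=> _ [A UA <-]; exact: (continuousP _).1 cpi _ (oU _ UA).
have cov' : setT `<=` \bigcup_(A in U') A.
  move=> y _; have [A UA Ay] := cov (pi y) I.
  by exists (pi @^-1` A) => //; exists A.
have y0 := sec x1.
have := Yn s U' fU' oU' cov'.
move/(esup0P (fun n => @rr_ge0 _ b U' s n y0 fU' cov')) => hYn.
apply/(esup0P (fun n => @rr_ge0 _ a U s n x1 fU cov)) => e e0.
have := hYn e e0; apply: filterS => n H; apply: le_trans H.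
rewrite /rr; have [mY cY'] := join_covers b s n fU' cov'.
have [NY [cNY -> _]] := @Ncov_attain Y R _ _ cY'.
have cX' := covers_transfer cNY.
have [NX [cNX -> minX]] := @Ncov_attain X R _ _ cX'.
have le := minX _ cX'.
have NX0 := covers_gt0 x1 cNX; have NY0 := covers_gt0 y0 cNY.
rewrite /=; apply: ler_wpM2r; first by rewrite invr_ge0.
by rewrite ler_ln ?posrE ?ltr0n // ler_nat.
Qed.


Lemma partB : null_action R b -> ~ arb_large_indep a Ap Am.
Proof.
move=> Yn arb.
have H k : exists e : 'I_(2^k) -> G, injective e /\
    forall w : {ffun 'I_(2^k) -> bool}, exists y, forall j, (0 < ft (b (e j) y)) = w j.
  have [M [fM indM [e [ie sM]]]] := arb (2^k)%N.
  exists e; split => //; apply: (@indep_ysh M) => //; by rewrite expn_gt0.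
pose e k := projT1 (cid (H k)).
have ie k : injective (e k) := (projT2 (cid (H k))).1.
have ye k := (projT2 (cid (H k))).2.
pose s i := let k := trunc_log 2 i in odflt 1%g (omap (e k) (insub (i - 2^k)%N)).
have sE k (j : 'I_(2^k)) : s (2^k + j)%N = e k j.
  rewrite /s (@trunc_log_eq 2 k) //; last first.
    by rewrite leq_addr /= expnS mul2n -addnn ltn_add2l.
  by rewrite addKn insubT /= => // Hj; congr (e k _); exact: val_inj.
pose Cp := [set y | 0 < ft y]; pose Cm := [set y | ft y < 0].
pose Uc := [set Cp; Cm].
have fU : finite_set Uc := finite_set2 _ _.
have oU : forall A, Uc A -> open A.
  move=> A [->|->].
    by have := (continuousP _).1 ftc _ (@open_gt R 0).
  by have := (continuousP _).1 ftc _ (@open_lt R 0).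
have cov : setT `<=` \bigcup_(A in Uc) A.
  move=> y _; case: (ftpm y) => E; [exists Cp; [by left|] | exists Cm; [by right|]];
  by rewrite /Cp /Cm /= E ?ltr01 ?oppr_lt0 ?ltr01.
have y0 := sec x1.
have := Yn s Uc fU oU cov.
move/(esup0P (fun n => @rr_ge0 _ b Uc s n y0 fU cov)) => hYn.
have l2 : 0 < ln (2 : R) by apply: ln_gt0; rewrite ltr1n.
have l4 : 0 < ln (2 : R) / 4 by rewrite divr_gt0.
have [N0 _ HN] := hYn _ l4.
pose k := N0; pose n := (2^k.+1).-1%N.
have nN : (N0 <= n)%N.
  rewrite /n -ltnS prednK ?expn_gt0 // /k.
  by apply: (@leq_trans (2^N0)%N); [exact: ltn_expl|rewrite leq_exp2l].
have n0 : (0 < n)%N by rewrite /n -ltnS prednK ?expn_gt0 // -[1%N]/(2^0)%N ltn_exp2l.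
have n2 : (n <= 2 * 2^k)%N by rewrite /n -expnS leq_pred.
have lb : forall m, covers (join_cover b Uc s n) m -> (2^(2^k) <= m)%N.
  move=> m [F [JF cF]].
  pose yw (w : {ffun 'I_(2^k) -> bool}) := projT1 (cid (ye k w)).
  have yE w j : (0 < ft (b (e k j) (yw w))) = w j := projT2 (cid (ye k w)) j.
  have : forall w, exists j, F j (yw w).
    by move=> w; have [j _ Fj] := cF (yw w) I; exists j.
  move=> /fin_all_exists[phi Hphi].
  have iphi : injective phi.
    move=> w w' E; apply/ffunP => jj.
    have Fw := Hphi w; have Fw' := Hphi w'; rewrite -E in Fw'.
    have [W [UW FE]] := JF (phi w).
    rewrite FE in Fw Fw'.
    have Hi : (0 < 2^k + jj <= n)%N.
      apply/andP; split; first by rewrite addn_gt0 expn_gt0.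
      by rewrite /n -ltnS prednK ?expn_gt0 // expnS mul2n -addnn ltn_add2l ltn_ord.
    have := Fw _ Hi; have := Fw' _ Hi; rewrite /= sE -yE -yE.
    have [->|->] : W (2^k + jj)%N = Cp \/ W (2^k + jj)%N = Cm := UW _ Hi;
      rewrite /Cp /Cm /= => p1 p2.
      by rewrite p1 p2.
    by rewrite !ltNge !ltW.
  by have := leq_card phi iphi; rewrite card_ffun card_bool !card_ord.
have [mY cY'] := join_covers b s n fU cov.
have [NY [cNY NYE _]] := @Ncov_attain Y R _ _ cY'.
have NYb := lb _ cNY.
have := HN n nN; rewrite /rr NYE /=.
have P0 : (0 : R) < (2^k)%:R by rewrite ltr0n expn_gt0.
have lnb : (2^k)%:R * ln (2 : R) <= ln (NY%:R : R).
  rewrite mulr_natl -lnXn ?ltr0n // ler_ln ?posrE ?ltr0n ?exprn_gt0 ?expn_gt0 //.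
    by rewrite -natrX ler_nat.
  by rewrite (leq_trans _ NYb) // expn_gt0.
have nR : (n%:R : R) <= 2 * (2^k)%:R by rewrite -natrM ler_nat.
have nR0 : (0 : R) < n%:R by rewrite ltr0n.
rewrite ler_pdivrMr // => Hle.
have : ln (2 : R) / 4 * n%:R <= ln 2 / 4 * (2 * (2^k)%:R) by rewrite ler_wpM2l // ltW.
move: Hle lnb; set L := ln (NY%:R : R); set c := ln (2 : R); set P := ((2^k)%:R : R).
move=> H1 H2 H3; have cP : 0 < c * P := mulr_gt0 l2 P0.
lra.
Qed.


Lemma bound_lemma (T : finType) (B : T -> set X) (h : T -> G) (Up Um : T -> set Y)
  (U : set (set Y)) s n n0 :
  (forall t, U (Up t)) -> (forall t, U (Um t)) ->
  setT `<=` \bigcup_(t in setT) B t ->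
  (forall t y, B t (pi y) -> (if 0 < ft (b (h t) y) then Up t else Um t) y) ->
  (forall M, finite_set M -> indep_set a Ap Am M ->
     ~ (exists e : 'I_n0 -> G, injective e /\ range e `<=` M)) ->
  rr b U s n <= rr a (range B) s n + n0%:R * ln ((#|T| * n.+1).+1)%N%:R / n%:R.
Proof.
move=> UUp UUm covB keyB Hn0.
have [t0 _ _] := covB x1 I.
have fB : finite_set (range B) := finite_image B finite_finset.
have covB' : setT `<=` \bigcup_(A in range B) A.
  by move=> x _; have [t _ Bt] := covB x I; exists (B t) => //; exists t.
have [mX cmX] := join_covers a s n fB covB'.
have [NX [cNX NXE _]] := @Ncov_attain X R _ _ cmX.
case: cNX => FX [JFX cFX].
have : forall j, exists tj : nat -> T,
    FX j = \bigcap_(i in [set i | (0 < i <= n)%N]) (a (s i) @^-1` B (tj i)).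
  move=> j; have [W [UW ->]] := JFX j.
  have [tj Htj] : {tj : nat -> T & forall i, (0 < i <= n)%N -> W i = B (tj i)}.
    apply: (@choice _ _ (fun i t => (0 < i <= n)%N -> W i = B t)) => i.
    case: (boolP (0 < i <= n)%N) => Hi; last by exists t0.
    by have [t _ <-] := UW i Hi; exists t.
  exists tj; apply/seteqP; split => x Hx i Hi; have := Hx i Hi; by rewrite /= (Htj i Hi).
move=> /fin_all_exists[tj Htj].
pose pat (y : Y) : {ffun T * 'I_n.+1 -> bool} :=
  [ffun q : T * 'I_n.+1 => 0 < ft (b (h q.1) (b (s (nat_of_ord q.2)) y))].
pose S := [set p : {ffun T * 'I_n.+1 -> bool} | `[< exists y, pat y = p >]]%SET.
pose FY (jp : 'I_NX * {p | p \in S}) := \bigcap_(i in [set i | (0 < i <= n)%N])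
   (b (s i) @^-1` (if val jp.2 (tj jp.1 i, inord i) then Up (tj jp.1 i) else Um (tj jp.1 i))).
have cY' : covers (join_cover b U s n) #|{: 'I_NX * {p | p \in S}}|.
  apply: (@covers_fin _ _ _ FY).
    move=> jp; eexists; split; last reflexivity.
    by move=> i _ /=; case: ifP.
  move=> y _.
  have [j _ Fj] := cFX (pi y) I.
  have pS : pat y \in S by rewrite /S inE; apply/asboolP; exists y.
  exists (j, exist _ (pat y) pS) => // i Hi.
  have := Fj; rewrite Htj => /(_ i Hi) /= Bt.
  have := keyB (tj j i) (b (s i) y); rewrite epi => /(_ Bt).
  rewrite ffunE /= inordK //; last by case/andP: Hi => _; rewrite ltnS.
have [NY [cNY NYE minY]] := @Ncov_attain Y R _ _ cY'.
have NYJ := minY _ cY'.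
have cJ : #|{: 'I_NX * {p | p \in S}}| = (NX * #|S|)%N by rewrite card_prod card_ord card_sig.
have shatb : forall E, shat S E -> (#|E| <= n0)%N.
  move=> E shE; apply: ltnW; rewrite ltnNge; apply/negP => En0.
  pose tau (q : T * 'I_n.+1) := (h q.1 * s (nat_of_ord q.2))%g.
  have patE y q : pat y q = (0 < ft (b (tau q) y)) by rewrite ffunE b_mul.
  have tinj : {in E &, injective tau}.
    move=> q q' qE q'E tq; apply: contrapT => nq.
    have /forallP/(_ [ffun u => u == q])/existsP[p /andP[pS /forall_inP pg]] := shE.
    move: pS; rewrite /S inE => /asboolP[y py]; subst p.
    have := pg q qE; have := pg q' q'E; rewrite !patE !ffunE eqxx tq.
    have -> : (q' == q) = false by apply/negbTE/eqP => E'; apply: nq.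
    by move=> /eqP -> /eqP.
  pose M := [set tau q | q in [set q | q \in E]].
  have fM : finite_set M := finite_image _ finite_finset.
  have ysh : forall w : G -> bool, exists y, forall t, M t -> (0 < ft (b t y)) = w t.
    move=> w.
    have /forallP/(_ [ffun q => w (tau q)])/existsP[p /andP[pS /forall_inP pg]] := shE.
    move: pS; rewrite /S inE => /asboolP[y py]; subst p.
    exists y => _ [q qE <-]; have := pg q qE; rewrite patE ffunE => /eqP //.
  have iM := ysh_indep fM ysh.
  apply: (Hn0 M fM iM).
  exists (fun j => tau (@enum_val _ (mem E) (widen_ord En0 j))); split.
    move=> j j' E'; have := tinj _ _ (enum_valP _) (enum_valP _) E'.
    by move=> /enum_val_inj /(congr1 val) /= /val_inj.
  move=> _ [j _ <-]; exists (enum_val (widen_ord En0 j)) => //.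
  exact: enum_valP.
have Sb := @pajor_bound _ S n0 shatb.
rewrite card_prod card_ord in Sb.
have y0 := sec x1.
have S0 : (0 < #|S|)%N by apply/card_gt0P; exists (pat y0); rewrite /S inE; apply/asboolP; exists y0.
have NX0 := covers_gt0 x1 (ex_intro _ FX (conj JFX cFX)).
rewrite /rr NYE NXE /=.
rewrite -mulrDl ler_wpM2r ?invr_ge0 //.
apply: (@le_trans _ _ (ln ((NX * #|S|)%N%:R))).
  have NY0 := covers_gt0 y0 cNY.
  rewrite ler_ln ?posrE ?ltr0n ?muln_gt0 ?NX0 ?S0 ?NY0 //.
  by rewrite ler_nat -cJ.
rewrite natrM lnM ?posrE ?ltr0n // lerD2l.
rewrite mulr_natl -lnXn ?ltr0n // ler_ln ?posrE ?ltr0n ?exprn_gt0 ?ltr0n //.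
by rewrite -natrX ler_nat.
Qed.


Lemma partC : null_action R a -> ~ arb_large_indep a Ap Am -> null_action R b.
Proof.
move=> Xn narb s U fU oU cov.
have [n0 Hn0] : exists n0, forall M, finite_set M -> indep_set a Ap Am M ->
    ~ (exists e : 'I_n0 -> G, injective e /\ range e `<=` M).
  apply: contrapT => H; apply: narb => n; apply: contrapT => Hn; apply: H.
  by exists n => M fM iM He; apply: Hn; exists M; split.
have kc := key_cover oU cov.
have : forall x, exists q : (set X * G) * (set Y * set Y),
    [/\ open q.1.1, q.1.1 x, U q.2.1, U q.2.2 &
     forall y, q.1.1 (pi y) -> (if 0 < ft (b q.1.2 y) then q.2.1 else q.2.2) y].
  by move=> x; have [B [h [Up [Um H]]]] := kc x; exists ((B, h), (Up, Um)).
move=> /choice[Q HQ].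
have := compact_coverT cX; rewrite cover_compactE => /(_ X setT (fun x => (Q x).1.1)).
case.
- exists (fun x => (Q x).1.1) => x _; [by case: (HQ x)|by rewrite setTI].
- by move=> x _; exists x => //; case: (HQ x).
move=> D' _ covD.
pose B (t : D') := (Q (val t)).1.1.
pose h (t : D') := (Q (val t)).1.2.
pose Up (t : D') := (Q (val t)).2.1.
pose Um (t : D') := (Q (val t)).2.2.
have covB : setT `<=` \bigcup_(t in setT) B t.
  by move=> x _; have [x' x'D Bx] := covD x I; exists [` x'D]%fset.
have fB : finite_set (range B) := finite_image B finite_finset.
have oB : forall A, range B A -> open A by move=> _ [t _ <-]; case: (HQ (val t)).
have covB' : setT `<=` \bigcup_(A in range B) A.
  by move=> x _; have [t _ Bt] := covB x I; exists (B t) => //; exists t.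
have y0 := sec x1.
apply/(esup0P (fun n => @rr_ge0 _ b U s n y0 fU cov)) => e e0.
have e2 : 0 < e / 2 by rewrite divr_gt0.
have hXn := (esup0P (fun n => @rr_ge0 _ a (range B) s n x1 fB covB')).1 (Xn s _ fB oB covB') _ e2.
have hV := num_lemma #|{: D'}| n0 e2.
near=> n.
have UUp t : U (Up t) by case: (HQ (val t)).
have UUm t : U (Um t) by case: (HQ (val t)).
have keyB t y : B t (pi y) -> (if 0 < ft (b (h t) y) then Up t else Um t) y.
  by case: (HQ (val t)) => _ _ _ _; apply.
have bl := @bound_lemma _ B h Up Um U s n n0 UUp UUm covB keyB Hn0.
apply: le_trans bl _.
have h1 : rr a (range B) s n <= e / 2 by near: n.
have h2 : n0%:R * ln ((#|{: D'}| * n.+1).+1)%N%:R / n%:R <= e / 2 by near: n.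
lra.
Unshelve. all: by end_near. Qed.

End Main.

Theorem proposition3p1
  (R : realType) (G : groupType)
  (X : pseudoMetricType R) (a : G -> X -> X)
  (x1 : X) (f : X -> R)
  (Y : pseudoMetricType R) (b : G -> Y -> Y) (pi : Y -> X) :
  (* Gamma countably infinite *)
  countable [set: G] -> infinite_set [set: G] ->
  (* X compact metrizable (a compact Hausdorff metric space) *)
  hausdorff_space X -> compact [set: X] ->
  (* minimal continuous action with more than one orbit *)
  continuous_action a -> minimal_action a ->
  (exists x y : X, ~ act_orbit a x y) ->
  (* x1 has trivial stabilizer *)
  (forall g : G, a g x1 = x1 -> g = 1%g) ->
  (* f : X \ {x1} -> {1,-1} continuous, not extendable continuously to X *)
  (forall x, x <> x1 -> f x = 1 \/ f x = -1) ->
  {within ~` [set x1], continuous f} ->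
  ~ (exists g : X -> R, continuous g /\ forall x, x <> x1 -> g x = f x) ->
  (* (Y, b, pi) is the McMahon extension associated to f *)
  hausdorff_space Y -> compact [set: Y] ->
  continuous_action b -> minimal_action b ->
  continuous pi -> (forall x, exists y, pi y = x) ->
  (forall g y, pi (b g y) = a g (pi y)) ->
  (forall x, ~ act_orbit a x1 x -> exists y, pi @^-1` [set x] = [set y]) ->
  (forall x, act_orbit a x1 x ->
     exists y1 y2, y1 <> y2 /\ pi @^-1` [set x] = [set y1; y2]) ->
  (exists ft : Y -> R, [/\ continuous ft, (forall y, ft y = 1 \/ ft y = -1)
     & forall y, pi y <> x1 -> ft y = f (pi y)]) ->
  (* conclusion *)
  null_action R b <->
  (null_action R a /\
   ~ arb_large_indep a [set x | x <> x1 /\ f x = 1]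
                       [set x | x <> x1 /\ f x = -1]).
Proof.
move=> _ _ hX cX ca ma orb2 stab fpm fc fnext hY cY cb mb cpi spi epi fib1 fib2 [ft [ftc ftpm ftf]].
split.
  move=> Yn; split; first exact: (partA x1 cpi spi epi Yn).
  exact: (partB spi epi ftc ftpm ftf Yn).
move=> [Xn narb].
exact: (partC hX cX ca fnext cY cb mb cpi spi epi fib1 fib2 orb2 ftc ftpm ftf Xn narb).
Qed.
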